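(* Let $G$ be a group, $g,h\in G$, and $k=\min\{|G:C_G(g)|,|G:C_G(h)|\}$, assumed finite. If the set $\{x\in G:[g,h^x]=1\}$ is $k$-large in $G$, then every element of the conjugacy class $g^G$ commutes with every element of the conjugacy class $h^G$.
   Context: $[a,b]=a^{-1}b^{-1}ab$, $a^x=x^{-1}ax$. A subset $X\subseteq G$ is $k$-large in $G$ if the intersection of any $k$ left translates $a_1X\cap\dots\cap a_kX$ ($a_i\in G$) is non-empty. *)

(* Defs.v *)
From Stdlib Require Import Arith.

Record group := Group {
  carrier :> Type;
  mul : carrier -> carrier -> carrier;
  inv : carrier -> carrier;
  one : carrier;
  mulA : forall a b c, mul a (mul b c) = mul (mul a b) c;
  mul1g : forall a, mul one a = a;
  mulVg : forall a, mul (inv a) a = one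
}.

Arguments mul {g}.
Arguments inv {g}.
Arguments one {g}.

Definition conjg {G : group} (a x : G) : G := mul (inv x) (mul a x).
Definition commg {G : group} (a b : G) : G :=
  mul (inv a) (mul (inv b) (mul a b)).

Definition in_centralizer {G : group} (g x : G) : Prop := mul x g = mul g x.

(* A subset H (here given as a predicate) has finite index n in G:
   there are n elements a_0..a_{n-1} such that every x lies in exactly one
   left coset a_i H  (x in a_i H  iff  a_i^{-1} x in H). *)
Definition has_index {G : group} (H : G -> Prop) (n : nat) : Prop :=
  exists a : nat -> G,
    forall x : G, exists i, i < n /\ H (mul (inv (a i)) x) /\
      forall j, j < n -> H (mul (inv (a j)) x) -> j = i.

(* k = min{|G:C_G(g)|, |G:C_G(h)|}, with infinite indices counted as infinity;
   asserting this for a natural number k includes the finiteness assumption. *)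
Definition is_min_index {G : group} (g h : G) (k : nat) : Prop :=
  (has_index (in_centralizer g) k /\
     forall m, has_index (in_centralizer h) m -> k <= m)
  \/
  (has_index (in_centralizer h) k /\
     forall m, has_index (in_centralizer g) m -> k <= m).

(* X is k-large: any k left translates a_1 X, ..., a_k X have a common point
   (y in a X iff a^{-1} y in X). *)
Definition k_large {G : group} (X : G -> Prop) (k : nat) : Prop :=
  forall a : nat -> G, exists y : G,
    forall i, i < k -> X (mul (inv (a i)) y).

(* Main.v *)
Require Import Defs.
From Stdlib Require Import Arith.

Lemma mulgV {G : group} (a : G) : mul a (inv a) = one.
Proof.
  assert (Hb : mul (mul a (inv a)) (mul a (inv a)) = mul a (inv a)).
  { rewrite <- mulA. rewrite (mulA G (inv a) a (inv a)). rewrite mulVg, mul1g. reflexivity. }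
  rewrite <- (mulVg G (mul a (inv a))).
  rewrite <- Hb at 3. rewrite mulA, mulVg, mul1g. reflexivity.
Qed.

Lemma mulg1 {G : group} (a : G) : mul a one = a.
Proof. rewrite <- (mulVg G a), mulA, mulgV, mul1g. reflexivity. Qed.

Lemma mulKg {G : group} (a b : G) : mul a (mul (inv a) b) = b.
Proof. rewrite mulA, mulgV, mul1g. reflexivity. Qed.

Lemma mulVKg {G : group} (a b : G) : mul (inv a) (mul a b) = b.
Proof. rewrite mulA, mulVg, mul1g. reflexivity. Qed.

Lemma mulgK {G : group} (a b : G) : mul (mul b a) (inv a) = b.
Proof. rewrite <- mulA, mulgV, mulg1. reflexivity. Qed.

Lemma mulgVK {G : group} (a b : G) : mul (mul b (inv a)) a = b.
Proof. rewrite <- mulA, mulVg, mulg1. reflexivity. Qed.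

Lemma inv_uniq {G : group} (a b : G) : mul a b = one -> inv a = b.
Proof.
  intro H. rewrite <- (mulg1 (inv a)), <- H, mulVKg. reflexivity.
Qed.

Lemma invM {G : group} (a b : G) : inv (mul a b) = mul (inv b) (inv a).
Proof.
  apply inv_uniq. rewrite <- mulA, (mulA G b (inv b)), mulgV, mul1g, mulgV. reflexivity.
Qed.

Lemma invK {G : group} (a : G) : inv (inv a) = a.
Proof. apply inv_uniq. apply mulVg. Qed.

Lemma commg1 {G : group} (a b : G) : commg a b = one <-> mul a b = mul b a.
Proof.
  unfold commg. split; intro H.
  - assert (H2 : mul (inv b) (mul a b) = a).
    { rewrite <- (mulKg a (mul (inv b) (mul a b))), H, mulg1. reflexivity. }
    rewrite <- H2 at 2. rewrite mulKg. reflexivity.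
  - rewrite H, mulVKg, mulVg. reflexivity.
Qed.

Lemma conjgM {G : group} (a b x : G) : conjg (mul a b) x = mul (conjg a x) (conjg b x).
Proof.
  unfold conjg. rewrite <- !mulA. f_equal. rewrite mulKg. reflexivity.
Qed.

Lemma conjgMr {G : group} (a x y : G) : conjg a (mul x y) = conjg (conjg a x) y.
Proof.
  unfold conjg. rewrite invM. rewrite <- !mulA. reflexivity.
Qed.

Lemma conjg_comm {G : group} (a b x : G) : mul a b = mul b a ->
  mul (conjg a x) (conjg b x) = mul (conjg b x) (conjg a x).
Proof. intro H. rewrite <- !conjgM, H. reflexivity. Qed.

Lemma conjgKV {G : group} (a c : G) : conjg (conjg a c) (inv c) = a.
Proof. rewrite <- conjgMr, mulgV. unfold conjg. rewrite mulg1.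
  assert (inv (@one G) = one) by (apply inv_uniq; apply mul1g).
  rewrite H, mul1g. reflexivity. Qed.

Lemma conjg_cent {G : group} (a c : G) : mul c a = mul a c -> conjg a c = a.
Proof. intro H. unfold conjg. rewrite <- H, mulVKg. reflexivity. Qed.

Lemma conj_cent_mul {G : group} (h c t : G) : mul c h = mul h c ->
  conjg h (mul c t) = conjg h t.
Proof. intro H. rewrite conjgMr, (conjg_cent h c H). reflexivity. Qed.

Lemma cent_inv {G : group} (a c : G) : mul c a = mul a c -> mul (inv c) a = mul a (inv c).
Proof.
  intro H. transitivity (mul (mul (inv c) (mul a c)) (inv c)).
  - rewrite mulA, mulgK. reflexivity.
  - rewrite <- H, mulVKg. reflexivity.
Qed.

Theorem theorem5p9 (G : group) (g h : G) (k : nat) :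
  is_min_index g h k ->
  k_large (fun x : G => commg g (conjg h x) = one) k ->
  forall x y : G, mul (conjg g x) (conjg h y) = mul (conjg h y) (conjg g x).
Proof.
  intros Hmin Hlarge.
  assert (Hall : forall w : G, mul g (conjg h w) = mul (conjg h w) g).
  { intro w. destruct Hmin as [[[a Ha] _] | [[a Ha] _]].
    -
      destruct (Hlarge (fun i => mul (a i) (inv w))) as [y Hy].
      destruct (Ha y) as [i [Hi [Hc _]]].
      specialize (Hy i Hi). simpl in Hy.
      rewrite invM, invK, <- mulA in Hy.
      set (c := mul (inv (a i)) y) in *.
      unfold in_centralizer in Hc.
      apply commg1 in Hy. rewrite conjgMr in Hy.
      apply (conjg_comm _ _ (inv c)) in Hy.
      rewrite conjgKV in Hy.
      rewrite (conjg_cent g (inv c)) in Hy. exact Hy.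
      apply cent_inv. exact Hc.
    - destruct (Hlarge a) as [y Hy].
      destruct (Ha (mul y (inv w))) as [i [Hi [Hc _]]].
      specialize (Hy i Hi). simpl in Hy.
      apply commg1 in Hy.
      assert (E : mul (inv (a i)) y = mul (mul (inv (a i)) (mul y (inv w))) w).
      { rewrite <- !mulA, mulVg, mulg1. reflexivity. }
      rewrite E, conj_cent_mul in Hy by exact Hc. exact Hy. }
  intros x y.
  specialize (Hall (mul y (inv x))).
  apply (conjg_comm _ _ x) in Hall.
  rewrite <- conjgMr, mulgVK in Hall. exact Hall.
Qed.
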